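(* Let $F$ be a non-archimedean local field of characteristic not $2$ with valuation ring $\mathfrak{o}$, $V$ a $2$-dimensional $F$-vector space, and $\ddagger$ an orthogonal involution on $End(V)$ with associated bilinear form $b_\ddagger$ and quadratic form $q_\ddagger$. (1) Let $\phi$ be an automorphism of the algebra with involution $(End(V),\ddagger)$, and let $\Lambda$ be an $\mathfrak{a}$-maximal lattice for some fractional ideal $\mathfrak{a}$. Then there exist $\lambda\in F^\times$ and a $\lambda\mathfrak{a}$-maximal lattice $\Lambda'$ such that $$\phi\bigl(End(\Lambda)\cap End(\Lambda^\sharp)\bigr)=End(\Lambda')\cap End(\Lambda'^\sharp).$$ (2) Conversely, if $\Lambda,\Lambda'$ are both $\mathfrak{a}$-maximal lattices, then there is an automorphism $\phi$ of $(End(V),\ddagger)$ with $\phi\bigl(End(\Lambda)\cap End(\Lambda^\sharp)\bigr)=End(\Lambda')\cap End(\Lambda'^\sharp)$.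
   Context: $b_\ddagger$ is a nondegenerate symmetric bilinear form on $V$ with $b_\ddagger(v,\sigma w)=b_\ddagger(\sigma^\ddagger v,w)$ (fixed up to scaling), $q_\ddagger(v)=b_\ddagger(v,v)$. An automorphism of $(End(V),\ddagger)$ is an $F$-algebra automorphism commuting with $\ddagger$. A lattice is a finitely generated $\mathfrak{o}$-submodule spanning $V$; $\Lambda^\sharp=\{v: b_\ddagger(v,\Lambda)\subset\mathfrak{o}\}$; $End(\Lambda)=\{\sigma:\sigma\Lambda\subset\Lambda\}$. The norm $\mathfrak{n}\Lambda$ is the fractional ideal generated by $q_\ddagger(\Lambda)$. For a fractional ideal $\mathfrak{a}$, $\Lambda$ is $\mathfrak{a}$-maximal if $\mathfrak{n}\Lambda\subset\mathfrak{a}$ and every lattice $\Lambda'\supset\Lambda$ with $\mathfrak{n}\Lambda'\subset\mathfrak{a}$ equals $\Lambda$. *)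

(* Defs.v *)
From HB Require Import structures.
From mathcomp Require Import all_boot all_order all_algebra.
Set Implicit Arguments. Unset Strict Implicit. Unset Printing Implicit Defensive.
Import Order.TTheory GRing.Theory Num.Theory.
Local Open Scope ring_scope.

Section LocalField.
Variables (F : fieldType) (v : F -> int).

(* v is a normalized discrete valuation (only its values on nonzero elements matter). *)
Record discrete_valuation : Prop := {
  dv_mul : forall x y, x != 0 -> y != 0 -> v (x * y) = v x + v y;
  dv_add : forall x y, x != 0 -> y != 0 -> x + y != 0 ->
             Order.min (v x) (v y) <= v (x + y);
  dv_surj : forall n : int, exists x, x != 0 /\ v x = n }.

Definition vring (x : F) : Prop := x = 0 \/ 0 <= v x.

Definition vsmall (k : int) (x : F) : Prop := x = 0 \/ k <= v x.

Definition vcauchy (u : nat -> F) : Prop :=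
  forall k : int, exists N : nat, forall m n, (N <= m)%N -> (N <= n)%N ->
    vsmall k (u m - u n).

Definition vconverges (u : nat -> F) (l : F) : Prop :=
  forall k : int, exists N : nat, forall n, (N <= n)%N -> vsmall k (u n - l).

Definition vcomplete : Prop :=
  forall u, vcauchy u -> exists l, vconverges u l.

Definition finite_residue_field : Prop :=
  exists s : seq F, (forall y, y \in s -> vring y) /\
    forall x, vring x -> exists2 y, y \in s & vsmall 1 (x - y).

Definition nonarch_local_field : Prop :=
  [/\ discrete_valuation, vcomplete & finite_residue_field].

Definition fractional_ideal (I : F -> Prop) : Prop :=
  (exists n (g : 'I_n -> F), forall x,
      I x <-> exists c : 'I_n -> F, (forall i, vring (c i)) /\ x = \sum_i c i * g i)
  /\ exists x, I x /\ x != 0.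

Definition scale_ideal (l : F) (I : F -> Prop) : F -> Prop :=
  fun x => exists2 a, I a & x = l * a.

(* V = F^2 (column vectors), End(V) = 2x2 matrices acting on the left. *)
Variable B : 'M[F]_2. (* Gram matrix of b_dagger *)

Definition bform (x y : 'cV[F]_2) : F := (x^T *m B *m y) 0 0.
Definition qform (x : 'cV[F]_2) : F := bform x x.

Definition is_lattice (L : 'cV[F]_2 -> Prop) : Prop :=
  exists n (g : 'I_n -> 'cV[F]_2),
    (forall x, L x <-> exists c : 'I_n -> F,
        (forall i, vring (c i)) /\ x = \sum_i c i *: g i)
    /\ (forall w : 'cV[F]_2, exists c : 'I_n -> F, w = \sum_i c i *: g i).

Definition dual_lattice (L : 'cV[F]_2 -> Prop) : 'cV[F]_2 -> Prop :=
  fun x => forall y, L y -> vring (bform x y).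

Definition End_lattice (L : 'cV[F]_2 -> Prop) : 'M[F]_2 -> Prop :=
  fun s => forall x, L x -> L (s *m x).

Definition norm_lattice (L : 'cV[F]_2 -> Prop) : F -> Prop :=
  fun a => exists n (y : 'I_n -> 'cV[F]_2) (c : 'I_n -> F),
    (forall i, L (y i) /\ vring (c i)) /\ a = \sum_i c i * qform (y i).

Definition maximal_lattice (I : F -> Prop) (L : 'cV[F]_2 -> Prop) : Prop :=
  [/\ is_lattice L,
      (forall a, norm_lattice L a -> I a) &
      forall L', is_lattice L' -> (forall x, L x -> L' x) ->
        (forall a, norm_lattice L' a -> I a) ->
        forall x, L' x -> L x].

Definition inv_automorphism (dag : 'M[F]_2 -> 'M[F]_2) (phi : 'M[F]_2 -> 'M[F]_2) : Prop :=
  bijective phi /\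
  (forall s t, phi (s + t) = phi s + phi t) /\
  (forall s t, phi (s * t) = phi s * phi t) /\
  phi 1 = 1 /\
  (forall (c : F) s, phi (c *: s) = c *: phi s) /\
  (forall s, phi (dag s) = dag (phi s)).

Definition order_of (L : 'cV[F]_2 -> Prop) : 'M[F]_2 -> Prop :=
  fun s => End_lattice L s /\ End_lattice (dual_lattice L) s.

End LocalField.

(* Main.v *)
Require Import Defs.
From HB Require Import structures.
From mathcomp Require Import all_boot all_order all_algebra.
From mathcomp Require Import zify ring.
From Stdlib Require Import Classical FunctionalExtensionality PropExtensionality.
Set Implicit Arguments. Unset Strict Implicit. Unset Printing Implicit Defensive.
Import Order.TTheory GRing.Theory Num.Theory.
Local Open Scope ring_scope.


Section Val.
Variables (F : fieldType) (v : F -> int).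
Hypothesis hv : discrete_valuation v.

Lemma v1 : v 1 = 0.
Proof.
have := dv_mul hv (oner_neq0 F) (oner_neq0 F); rewrite mulr1.
move: (v 1) => a h; lia.
Qed.

Lemma vV x : x != 0 -> v x^-1 = - v x.
Proof.
move=> x0; have xi0 : x^-1 != 0 by rewrite invr_eq0.
have := dv_mul hv x0 xi0; rewrite mulfV // v1.
move: (v x) (v x^-1) => a b h; lia.
Qed.

Lemma vNone : v (-1) = 0.
Proof.
have n0 : (-1 : F) != 0 by rewrite oppr_eq0 oner_neq0.
have := dv_mul hv n0 n0; rewrite mulrNN mulr1 v1.
move: (v (-1)) => a h; lia.
Qed.

Lemma vN x : x != 0 -> v (- x) = v x.
Proof.
move=> x0; have n0 : (-1 : F) != 0 by rewrite oppr_eq0 oner_neq0.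
by rewrite -mulN1r (dv_mul hv n0 x0) vNone add0r.
Qed.

Lemma vsmall0 k : vsmall v k 0. Proof. by left. Qed.

Lemma vsmallD k x y : vsmall v k x -> vsmall v k y -> vsmall v k (x + y).
Proof.
case=> [->|hx]; first by rewrite add0r.
case=> [->|hy]; first by rewrite addr0; right.
have [x0|x0] := eqVneq x 0; first by rewrite x0 add0r; right.
have [y0|y0] := eqVneq y 0; first by rewrite y0 addr0; right.
have [s0|s0] := eqVneq (x + y) 0; first by left.
right; apply: le_trans (dv_add hv x0 y0 s0).
by rewrite le_min hx hy.
Qed.

Lemma vsmallN k x : vsmall v k x -> vsmall v k (- x).
Proof.
case=> [->|hx]; first by rewrite oppr0; left.
have [x0|x0] := eqVneq x 0; first by rewrite x0 oppr0; left.
by right; rewrite vN.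
Qed.

Lemma vsmallB k x y : vsmall v k x -> vsmall v k y -> vsmall v k (x - y).
Proof. by move=> hx hy; apply: vsmallD => //; apply: vsmallN. Qed.

Lemma vsmallM k l x y : vsmall v k x -> vsmall v l y -> vsmall v (k + l) (x * y).
Proof.
case=> [->|hx]; first by rewrite mul0r; left.
case=> [->|hy]; first by rewrite mulr0; left.
have [x0|x0] := eqVneq x 0; first by rewrite x0 mul0r; left.
have [y0|y0] := eqVneq y 0; first by rewrite y0 mulr0; left.
by right; rewrite (dv_mul hv x0 y0); apply: lerD.
Qed.

Lemma vsmall_le k l x : k <= l -> vsmall v l x -> vsmall v k x.
Proof. by move=> kl [->|h]; [left|right; apply: le_trans h]. Qed.

Lemma vsmall_self x : vsmall v (v x) x.
Proof. by right. Qed.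

Lemma vsmallV x : x != 0 -> vsmall v (- v x) x^-1.
Proof. by move=> x0; right; rewrite vV. Qed.

Lemma vsmall_div k x y : y != 0 -> vsmall v k (x * y) -> vsmall v (k - v y) x.
Proof.
move=> y0 h; have := vsmallM h (vsmallV y0).
by rewrite -mulrA mulfV // mulr1.
Qed.

Lemma vsmall_sum k n (G : 'I_n -> F) : (forall i, vsmall v k (G i)) ->
  vsmall v k (\sum_i G i).
Proof.
move=> h; apply: (big_ind (vsmall v k)) => //; [exact: vsmall0|].
by move=> a b; apply: vsmallD.
Qed.

Lemma vsmall_all x : (forall k, vsmall v k x) -> x = 0.
Proof.
move=> h; case: (h (v x + 1)) => //; move: (v x) => a hh; exfalso; lia.
Qed.

Lemma vsmall_dec k x : vsmall v k x \/ ~ vsmall v k x.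
Proof.
have [x0|x0] := eqVneq x 0; first by left; left.
case: (lerP k (v x)) => h; first by left; right.
right; case=> [x00|]; first by rewrite x00 eqxx in x0.
move: (v x) h => a h h'; lia.
Qed.

Lemma exists_min n (w : 'I_n -> F) : (exists k, w k != 0) ->
  exists k0, w k0 != 0 /\ forall k, vsmall v (v (w k0)) (w k).
Proof.
case=> k1 hk1.
case: (@arg_minP _ int _ k1 (fun k => w k != 0) (fun k => v (w k)) hk1) => k0 hk0 hmin.
exists k0; split => // k.
have [->|kk] := eqVneq (w k) 0; first by left.
by right; apply: hmin.
Qed.

End Val.


Section Bil.
Variables (F : fieldType) (B : 'M[F]_2).
Hypothesis hBsym : B^T = B.
Hypothesis hBnd : B \in unitmx.

Local Notation b := (bform B).

Lemma bformDl x y z : b (x + y) z = b x z + b y z.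
Proof. by rewrite /bform linearD /= !mulmxDl mxE. Qed.
Lemma bformDr x y z : b z (x + y) = b z x + b z y.
Proof. by rewrite /bform !mulmxDr mxE. Qed.
Lemma bformZl (c : F) x z : b (c *: x) z = c * b x z.
Proof. by rewrite /bform linearZ /= -!scalemxAl mxE. Qed.
Lemma bformZr (c : F) x z : b z (c *: x) = c * b z x.
Proof. by rewrite /bform -!scalemxAr mxE. Qed.
Lemma bform0l z : b 0 z = 0.
Proof. by rewrite -(scale0r 0) bformZl mul0r. Qed.
Lemma bform0r z : b z 0 = 0.
Proof. by rewrite -(scale0r 0) bformZr mul0r. Qed.
Lemma bformNl x z : b (- x) z = - b x z.
Proof. by rewrite -scaleN1r bformZl mulN1r. Qed.
Lemma bformNr x z : b z (- x) = - b z x.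
Proof. by rewrite -scaleN1r bformZr mulN1r. Qed.
Lemma bformBl x y z : b (x - y) z = b x z - b y z.
Proof. by rewrite bformDl bformNl. Qed.
Lemma bformBr x y z : b z (x - y) = b z x - b z y.
Proof. by rewrite bformDr bformNr. Qed.

Lemma bformC x y : b x y = b y x.
Proof.
rewrite /bform; have -> : (x^T *m B *m y) 0 0 = ((x^T *m B *m y)^T) 0 0.
  rewrite [in RHS]mxE. done.
by rewrite !trmx_mul trmxK hBsym mulmxA.
Qed.

Lemma bform_sumr n (c : 'I_n -> F) g x :
  b x (\sum_i c i *: g i) = \sum_i c i * b x (g i).
Proof.
elim/big_rec2: _ => [|i y1 y2 _ <-]; first by rewrite bform0r.
by rewrite bformDr bformZr.
Qed.

Lemma bform_suml n (c : 'I_n -> F) g x :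
  b (\sum_i c i *: g i) x = \sum_i c i * b (g i) x.
Proof.
elim/big_rec2: _ => [|i y1 y2 _ <-]; first by rewrite bform0l.
by rewrite bformDl bformZl.
Qed.

Lemma bform_delta w j : b w (delta_mx j 0) = (w^T *m B) 0 j.
Proof. by rewrite /bform -colE mxE. Qed.

Lemma nondeg w : (forall y, b w y = 0) -> w = 0.
Proof.
move=> h.
have r0 : w^T *m B = 0.
  apply/matrixP => i j; rewrite (ord1 i) -bform_delta h mxE //.
have : w^T = 0 by rewrite -(mulmxK hBnd (w^T)) r0 mul0mx.
by move/(congr1 trmx); rewrite trmxK trmx0.
Qed.

Lemma nondeg_ex w : w != 0 -> exists y, b w y != 0.
Proof.
move=> w0; apply: NNPP => h; move/eqP: w0; apply; apply: nondeg => y.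
by apply/eqP/negPn/negP => hy; apply: h; exists y.
Qed.

Lemma mx_ext (M N : 'M[F]_2) : (forall x : 'cV[F]_2, M *m x = N *m x) -> M = N.
Proof.
move=> h; apply/matrixP => i j.
have := congr1 (fun A : 'cV[F]_2 => A i 0) (h (delta_mx j 0)).
by rewrite -!colE !mxE.
Qed.

Lemma adj_uniq (M N : 'M[F]_2) :
  (forall x y, b (M *m x) y = b (N *m x) y) -> M = N.
Proof.
move=> h; apply: mx_ext => x; apply/eqP; rewrite -subr_eq0; apply/eqP.
by apply: nondeg => y; rewrite bformBl h subrr.
Qed.


Definition rk1 (u w : 'cV[F]_2) : 'M[F]_2 := u *m (w^T *m B).

Lemma rk1E u w x : rk1 u w *m x = b w x *: u.
Proof.
by rewrite /rk1 -mulmxA (mx11_scalar (w^T *m B *m x)) mul_mx_scalar.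
Qed.

Lemma hyp_decomp e f : qform B e = 0 -> qform B f = 0 -> b e f = 1 ->
  forall x, x = b f x *: e + b e x *: f.
Proof.
move=> qe qf ef x.
pose N : 'M[F]_(1 + 1, 2) := col_mx (f^T *m B) (e^T *m B).
pose M : 'M[F]_(2, 1 + 1) := row_mx e f.
have NM : N *m M = 1%:M.
  rewrite /N /M mul_col_row (mx11_scalar (f^T *m B *m e)) (mx11_scalar (f^T *m B *m f)).
  rewrite (mx11_scalar (e^T *m B *m e)) (mx11_scalar (e^T *m B *m f)).
  rewrite -/(bform B f e) -/(bform B f f) -/(bform B e e) -/(bform B e f).
  rewrite -/(qform B f) -/(qform B e) qe qf bformC ef.
  by rewrite (scalar_mx_block 1 1 1) raddf0.
have MN : M *m N = 1%:M by apply: mulmx1C.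
rewrite {1}(_ : x = M *m (N *m x)); last by rewrite mulmxA MN mul1mx.
rewrite /N mul_col_mx /M mul_row_col -!mulmxA.
rewrite (mx11_scalar (f^T *m (B *m x))) (mx11_scalar (e^T *m (B *m x))) !mul_mx_scalar.
by rewrite /bform !mulmxA.
Qed.

End Bil.


Section Tr.
Variables (F : fieldType) (v : F -> int) (B : 'M[F]_2).
Local Notation b := (bform B).

Lemma mulmx_lin (A : 'M[F]_2) n (c : 'I_n -> F) (G : 'I_n -> 'cV[F]_2) :
  A *m (\sum_i c i *: G i) = \sum_i c i *: (A *m G i).
Proof. by rewrite mulmx_sumr; apply: eq_bigr => i _; rewrite scalemxAr. Qed.

Lemma lattice_tr (G H : 'M[F]_2) (P : 'cV[F]_2 -> Prop) :
  G *m H = 1%:M -> H *m G = 1%:M ->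
  is_lattice v P -> is_lattice v (fun x => P (H *m x)).
Proof.
move=> GH HG [n [gs [hP hs]]]; exists n, (fun i => G *m gs i); split.
  move=> x; split.
    case/hP => c [hc e]; exists c; split => //.
    by rewrite -mulmx_lin -e mulmxA GH mul1mx.
  case=> c [hc ->]; apply/hP; exists c; split => //.
  by rewrite mulmx_lin; apply: eq_bigr => i _; rewrite mulmxA HG mul1mx.
move=> w; case: (hs (H *m w)) => c e; exists c.
by rewrite -mulmx_lin -e mulmxA GH mul1mx.
Qed.

Lemma End_tr (G H : 'M[F]_2) (P P' : 'cV[F]_2 -> Prop) s :
  G *m H = 1%:M -> H *m G = 1%:M -> (forall x, P' x <-> P (H *m x)) ->
  End_lattice P' (G *m s *m H) <-> End_lattice P s.
Proof.
move=> GH HG hP; split.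
  move=> hE x Px.
  have : P' (G *m x) by apply/hP; rewrite mulmxA HG mul1mx.
  move/hE/hP; by rewrite !mulmxA HG mul1mx -(mulmxA s H G) HG mulmx1.
move=> hE x /hP Px; apply/hP.
by rewrite !mulmxA HG mul1mx -!mulmxA; apply: hE.
Qed.

Lemma norm_tr (G H : 'M[F]_2) (k : F) (P : 'cV[F]_2 -> Prop) a :
  G *m H = 1%:M -> (forall x y, b (G *m x) (G *m y) = k * b x y) ->
  norm_lattice v B (fun x => P (H *m x)) a ->
  exists a', norm_lattice v B P a' /\ a = k * a'.
Proof.
move=> GH hs [n [y [c [hy ->]]]].
exists (\sum_i c i * qform B (H *m y i)); split.
  by exists n, (fun i => H *m y i), c.
rewrite mulr_sumr; apply: eq_bigr => i _.
rewrite /qform -{1 2}[y i]mul1mx -GH -!mulmxA hs; ring.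
Qed.

Variables (g h : 'M[F]_2) (mu : F).
Hypotheses (gh : g *m h = 1%:M) (hg : h *m g = 1%:M) (mu0 : mu != 0)
  (hsim : forall x y, b (g *m x) (g *m y) = mu * b x y).

Lemma hsim' x y : b (h *m x) (h *m y) = mu^-1 * b x y.
Proof.
by rewrite -{2}[x]mul1mx -{2}[y]mul1mx -gh -!mulmxA hsim mulrA mulVf // mul1r.
Qed.

Lemma dual_tr (L : 'cV[F]_2 -> Prop) x :
  dual_lattice v B (fun y => L (h *m y)) x <-> dual_lattice v B L ((mu *: h) *m x).
Proof.
split.
  move=> hd z Lz; have : L (h *m (g *m z)) by rewrite mulmxA hg mul1mx.
  move/hd; rewrite -{1}[x]mul1mx -gh -mulmxA hsim.
  by rewrite -scalemxAl bformZl.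
move=> hd y Ly; have := hd _ Ly.
by rewrite -scalemxAl bformZl -hsim !mulmxA gh !mul1mx.
Qed.

Lemma GH' : (mu^-1 *: g) *m (mu *: h) = 1%:M.
Proof. by rewrite -scalemxAl -scalemxAr scalerA (mulVf mu0) scale1r gh. Qed.
Lemma HG' : (mu *: h) *m (mu^-1 *: g) = 1%:M.
Proof. by rewrite -scalemxAl -scalemxAr scalerA (mulfV mu0) scale1r hg. Qed.
Lemma ee' s : g *m s *m h = (mu^-1 *: g) *m s *m (mu *: h).
Proof. by rewrite -scalemxAl -scalemxAl -scalemxAr scalerA (mulVf mu0) scale1r. Qed.

Lemma order_tr (L : 'cV[F]_2 -> Prop) s :
  order_of v B (fun y => L (h *m y)) (g *m s *m h) <-> order_of v B L s.
Proof.
have e1 := @End_tr g h L (fun y => L (h *m y)) s gh hg (fun x => iff_refl _).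
have e2 := @End_tr (mu^-1 *: g) (mu *: h) (dual_lattice v B L)
   (dual_lattice v B (fun y => L (h *m y))) s GH' HG' (fun x => dual_tr L x).
rewrite -ee' in e2.
rewrite /order_of; split; case=> h1 h2; split.
- by apply/e1.
- by apply/e2.
- by apply/e1.
- by apply/e2.
Qed.

Lemma image_tr (L : 'cV[F]_2 -> Prop) t :
  (exists2 s, order_of v B L s & g *m s *m h = t) <->
  order_of v B (fun y => L (h *m y)) t.
Proof.
split.
  case=> s hs <-; exact: (proj2 (order_tr L s) hs).
move=> ht.
have e : g *m (h *m t *m g) *m h = t.
  by rewrite !mulmxA gh mul1mx -mulmxA gh mulmx1.
exists (h *m t *m g); last exact: e.
apply: (proj1 (order_tr L _)); rewrite e; exact: ht.
Qed.

Lemma maximal_tr (I : F -> Prop) (L : 'cV[F]_2 -> Prop) :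
  maximal_lattice v B I L ->
  maximal_lattice v B (scale_ideal mu I) (fun y => L (h *m y)).
Proof.
case=> hl hn hm; split.
- exact: (lattice_tr gh hg hl).
- move=> a /(norm_tr gh hsim) [a' [na' ->]]; exists a' => //; exact: hn.
- move=> L'' hl'' hsub hn'' x L''x.
  pose L3 := fun y => L'' (g *m y).
  have hl3 : is_lattice v L3 by exact: (lattice_tr hg gh hl'').
  have sub3 : forall y, L y -> L3 y.
    by move=> y Ly; apply: hsub; rewrite /L3 mulmxA hg mul1mx.
  have hn3 : forall a, norm_lattice v B L3 a -> I a.
    move=> a /(norm_tr hg hsim') [a' [na' ->]].
    case: (hn'' _ na') => a0 Ia0 ->.
    by rewrite mulrA (mulVf mu0) mul1r.
  apply: (hm L3 hl3 sub3 hn3); by rewrite /L3 mulmxA gh mul1mx.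
Qed.

End Tr.


Section Lat.
Variables (F : fieldType) (v : F -> int) (B : 'M[F]_2).
Hypothesis hv : discrete_valuation v.
Hypothesis hBsym : B^T = B.
Hypothesis hBnd : B \in unitmx.
Local Notation b := (bform B).
Local Notation q := (qform B).

Lemma vsmall_scale k c x : c != 0 -> vsmall v k (c * x) <-> vsmall v (k - v c) x.
Proof.
move=> c0; split; first by rewrite mulrC; apply: vsmall_div.
move=> h; have := vsmallM hv (vsmall_self v c) h.
by rewrite addrC subrK.
Qed.

Lemma vsmall_idx k k' x : k = k' -> vsmall v k x -> vsmall v k' x.
Proof. by move=> ->. Qed.

Lemma frac_exp I : fractional_ideal v I -> exists m, forall x, I x <-> vsmall v m x.
Proof.
case=> [[n [g hI]] [x0 [Ix0 x00]]].
have ex : exists k, g k != 0.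
  apply: NNPP => hne; move/eqP: x00; apply.
  case/hI: Ix0 => c [_ ->]; apply: big1 => i _.
  have -> : g i = 0 by apply/eqP/negPn/negP => hi; apply: hne; exists i.
  by rewrite mulr0.
case: (exists_min v ex) => k0 [gk0 hmin].
exists (v (g k0)) => x; split.
  case/hI => c [hc ->]; apply: (vsmall_sum hv) => i.
  by have := vsmallM hv (hc i) (hmin i); rewrite add0r.
move=> hx; apply/hI; exists (fun i => if i == k0 then x / g k0 else 0); split.
  move=> i; case: eqP => _; last by left.
  have := vsmallM hv hx (vsmallV hv gk0); rewrite addrN; exact.
rewrite (bigD1 k0) //= eqxx mulfVK // big1 ?addr0 // => i /negPf ->.
by rewrite mul0r.
Qed.

Lemma lattice_add L x y : is_lattice v L -> L x -> L y -> L (x + y).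
Proof.
case=> n [g [hL _]] /hL [c [hc ->]] /hL [c' [hc' ->]].
apply/hL; exists (fun i => c i + c' i); split.
  by move=> i; apply: (vsmallD hv); [exact: hc | exact: hc'].
by rewrite -big_split /=; apply: eq_bigr => i _; rewrite scalerDl.
Qed.

Lemma norm_q L y : L y -> norm_lattice v B L (q y).
Proof.
move=> Ly; exists 1%N, (fun _ => y), (fun _ => 1); split.
  by move=> _; split => //; right; rewrite v1.
by rewrite big_ord1 mul1r.
Qed.

Lemma norm_sub L m a : (forall y, L y -> vsmall v m (q y)) ->
  norm_lattice v B L a -> vsmall v m a.
Proof.
move=> h [n [y [c [hy ->]]]]; apply: (vsmall_sum hv) => i.
case: (hy i) => Ly hc.
by have := vsmallM hv hc (h _ Ly); rewrite add0r.
Qed.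

Lemma norm_b2 L m x y : is_lattice v L ->
  (forall a, norm_lattice v B L a -> vsmall v m a) -> L x -> L y ->
  vsmall v m (2 * b x y).
Proof.
move=> hl hn Lx Ly.
have e : 2 * b x y = q (x + y) - q x - q y.
  rewrite /qform !bformDl !bformDr (bformC hBsym y x); ring.
rewrite e; apply: (vsmallB hv) => //; [apply: (vsmallB hv) => //|];
  apply: hn; apply: norm_q => //; exact: lattice_add.
Qed.

Variables (e f : 'cV[F]_2).
Hypotheses (qe : q e = 0) (qf : q f = 0) (ef : b e f = 1).

Lemma fe : b f e = 1. Proof. by rewrite bformC. Qed.

Lemma coord_b x y : b x y = b f x * b e y + b e x * b f y.
Proof.
rewrite {1}(hyp_decomp hBsym qe qf ef x) {1}(hyp_decomp hBsym qe qf ef y).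
rewrite !bformDl !bformDr !bformZl !bformZr -/(q e) -/(q f) qe qf ef fe.
rewrite ?(bformC hBsym y e) ?(bformC hBsym y f). ring.
Qed.

Lemma coord_q x : q x = 2 * (b f x * b e x).
Proof. rewrite /qform coord_b; ring. Qed.

Lemma coord_f s t : b f (s *: e + t *: f) = s.
Proof. by rewrite bformDr !bformZr fe -/(q f) qf; ring. Qed.
Lemma coord_e s t : b e (s *: e + t *: f) = t.
Proof. by rewrite bformDr !bformZr ef -/(q e) qe; ring. Qed.

Variable m : int.
Hypothesis h2 : (2%:R : F) != 0.

Definition Dlat (i : int) : 'cV[F]_2 -> Prop :=
  fun x => vsmall v i (b f x) /\ vsmall v (m - i) (2 * b e x).

Lemma Dlat_lattice i : is_lattice v (Dlat i).
Proof.
case: (dv_surj hv i) => p [p0 vp].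
case: (dv_surj hv (m - i)) => p' [p'0 vp'].
pose gs := fun k : 'I_2 => if k == ord0 then p *: e else (p' / 2) *: f.
have sum2 : forall c : 'I_2 -> F, \sum_k c k *: gs k = (c ord0 * p) *: e + (c ord_max * (p' / 2)) *: f.
  move=> c; rewrite big_ord_recr big_ord1 /gs /= !scalerA.
  by have -> : widen_ord (leqnSn 1) ord0 = ord0 :> 'I_2 by apply: val_inj.
have h20 : (2 : F) != 0 by exact: h2.
exists 2%N, gs; split.
  move=> x; split.
    case=> hs ht.
    exists (fun k : 'I_2 => if k == ord0 then b f x / p else 2 * b e x / p').
    split.
      move=> k; case: ifP => _.
        by have := vsmallM hv hs (vsmallV hv p0); rewrite vp addrN.
      by have := vsmallM hv ht (vsmallV hv p'0); rewrite vp' addrN.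
    rewrite sum2 /= mulfVK // [X in X *: f](_ : _ = b e x); last first.
      by rewrite mulrA mulfVK // mulrC mulrA mulVf // mul1r.
    exact: hyp_decomp.
  case=> c [hc ->]; rewrite sum2 /Dlat coord_f coord_e; split.
    by have := vsmallM hv (hc ord0) (vsmall_self v p); rewrite vp add0r.
  have -> : 2 * (c ord_max * (p' / 2)) = p' * c ord_max.
    by rewrite mulrC -!mulrA (mulVf h20) mulr1 mulrC.
  by have := vsmallM hv (vsmall_self v p') (hc ord_max); rewrite vp' addr0.
move=> w; exists (fun k : 'I_2 => if k == ord0 then b f w / p else 2 * b e w / p').
rewrite sum2 /= mulfVK // [X in _ = _ + X *: f](_ : _ = b e w); last first.
  by rewrite mulrA mulfVK // mulrC mulrA mulVf // mul1r.
exact: hyp_decomp.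
Qed.

Lemma Dlat_norm i a : norm_lattice v B (Dlat i) a -> vsmall v m a.
Proof.
apply: norm_sub => y [hs ht]; rewrite coord_q mulrCA.
by have := vsmallM hv hs ht; rewrite addrC subrK.
Qed.

Lemma Dlat_bound L : is_lattice v L ->
  (forall a, norm_lattice v B L a -> vsmall v m a) ->
  exists i, forall x, L x -> Dlat i x.
Proof.
move=> hl hn; have hl' := hl; case: hl' => n [gs [hL hsp]].
have ex : exists k, b f (gs k) != 0.
  apply: NNPP => hne.
  case: (hsp e) => c ec.
  have := fe; rewrite ec bform_sumr big1 => [/eqP|i _]; first by rewrite eq_sym oner_eq0.
  have -> : b f (gs i) = 0 by apply/eqP/negPn/negP => hi; apply: hne; exists i.
  by rewrite mulr0.
case: (exists_min v ex) => k0 [s00 hmin].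
set x0 := gs k0 in s00 hmin.
have Lx0 : L x0 by apply/hL; exists (fun i => if i == k0 then 1 else 0); split;
  [move=> i; case: ifP => _; [right; rewrite v1|left] |
   rewrite (bigD1 k0) //= eqxx scale1r big1 ?addr0 // => i /negPf ->; rewrite scale0r].
exists (v (b f x0)) => x Lx; split.
  case/hL: Lx => c [hc ->]; rewrite bform_sumr; apply: (vsmall_sum hv) => i.
  by have := vsmallM hv (hc i) (hmin i); rewrite add0r.
set s0 := b f x0 in s00 hmin *.
have q0 : vsmall v m (2 * s0 * b e x0).
  by rewrite -mulrA -coord_q; apply: hn; apply: norm_q.
have bx : vsmall v m (2 * b x0 x) by exact: (norm_b2 hl hn Lx0 Lx).
have sx : vsmall v (v s0) (b f x).
  case/hL: Lx => c [hc ->]; rewrite bform_sumr; apply: (vsmall_sum hv) => i.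
  by have := vsmallM hv (hc i) (hmin i); rewrite add0r.
have t1 : vsmall v m (2 * s0 * b e x0 * (b f x / s0)).
  have := vsmallM hv q0 (vsmallM hv sx (vsmallV hv s00)).
  by rewrite addrN addr0.
have : vsmall v m ((2 * b e x) * s0).
  have -> : 2 * b e x * s0 = 2 * b x0 x - 2 * s0 * b e x0 * (b f x / s0).
    rewrite (coord_b x0 x) -/s0; field; exact: s00.
  exact: (vsmallB hv).
rewrite mulrC; move/(@vsmall_scale m s0 (2 * b e x) s00).
by [].
Qed.

Lemma hyp_max I L : (forall x, I x <-> vsmall v m x) -> maximal_lattice v B I L ->
  exists i, forall x, L x <-> Dlat i x.
Proof.
move=> hI [hl hn hm].
have hn' : forall a, norm_lattice v B L a -> vsmall v m a by move=> a /hn /hI.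
case: (Dlat_bound hl hn') => i hi; exists i => x; split; first exact: hi.
apply: hm; [exact: Dlat_lattice| exact: hi |].
by move=> a /Dlat_norm /hI.
Qed.

End Lat.


Section Aniso.
Variables (F : fieldType) (v : F -> int) (B : 'M[F]_2).
Hypothesis hv : discrete_valuation v.
Hypothesis hcomp : vcomplete v.
Hypothesis hBsym : B^T = B.
Local Notation b := (bform B).
Local Notation q := (qform B).

Lemma not_vsmall k x : ~ vsmall v k x -> x != 0 /\ v x < k.
Proof.
move=> h; split; first by apply/eqP => x0; apply: h; left.
by rewrite ltNge; apply/negP => hk; apply: h; right.
Qed.

Lemma unit_near1 w : vsmall v 1 (w - 1) -> w != 0 /\ vsmall v 0 w^-1.
Proof.
move=> h.
have nw : ~ vsmall v 1 w.
  move=> hw; have := vsmallB hv hw h; rewrite opprB addrC subrK.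
  case=> [/eqP|]; first by rewrite oner_eq0.
  by rewrite v1.
case: (not_vsmall nw) => w0 lt; split => //.
apply: (vsmall_le (k := 0) (l := - v w)); last exact: vsmallV.
move: lt; move: (v w) => a; lia.
Qed.

Lemma hensel (A Bc : F) : vsmall v 1 A -> vsmall v 1 (Bc - 1) ->
  exists l, vsmall v 0 l /\ Bc * l = 1 + A * l * l.
Proof.
move=> hA hB; case: (unit_near1 hB) => B0 hBi.
pose hf t := (1 + A * t * t) * Bc^-1.
have hfo : forall t, vsmall v 0 t -> vsmall v 0 (hf t).
  move=> t ht; rewrite /hf.
  have h1 : vsmall v 0 1 by right; rewrite v1.
  have hAtt : vsmall v 0 (A * t * t).
    apply: (vsmall_le (l := 1 + 0 + 0)); first by [].
    exact: (vsmallM hv (vsmallM hv hA ht) ht).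
  by have := vsmallM hv (vsmallD hv h1 hAtt) hBi; rewrite addr0.
have hfc : forall k t t', vsmall v 0 t -> vsmall v 0 t' -> vsmall v k (t - t') ->
    vsmall v (k + 1) (hf t - hf t').
  move=> k t t' ht ht' hk.
  have -> : hf t - hf t' = A * (t - t') * (t + t') * Bc^-1 by rewrite /hf; ring.
  have := vsmallM hv (vsmallM hv (vsmallM hv hA hk) (vsmallD hv ht ht')) hBi.
  by rewrite !addr0 addrC.
pose ts n := iter n hf 0.
have tso : forall n, vsmall v 0 (ts n).
  by elim=> [|n IH]; [left | apply: hfo].
have tsd : forall n : nat, vsmall v n%:Z (ts n.+1 - ts n).
  elim=> [|n IH]; first by rewrite /ts /= subr0; apply: hfo; left.
  have := hfc _ _ _ (tso n.+1) (tso n) IH.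
  have -> : (n.+1)%:Z = n%:Z + 1 by rewrite -addn1 PoszD.
  by [].
have tsN : forall (N d : nat), vsmall v N%:Z (ts (N + d)%N - ts N).
  move=> N; elim=> [|d IH]; first by rewrite addn0 subrr; left.
  have -> : ts (N + d.+1)%N - ts N = (ts (N + d).+1 - ts (N + d)%N) + (ts (N + d)%N - ts N).
    by rewrite addnS addrA subrK.
  apply: (vsmallD hv) => //.
  apply: (vsmall_le (l := (N + d)%N%:Z)) ; last exact: tsd.
  by rewrite PoszD lerDl.
have cauchy : vcauchy v ts.
  move=> k; exists (absz k) => i j hi hj.
  have -> : ts i - ts j = (ts i - ts (absz k)) - (ts j - ts (absz k)).
    by rewrite opprB addrA subrK.
  have kle : k <= (absz k)%:Z by apply: lez_abs.
  apply: (vsmallB hv); apply: (vsmall_le kle).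
    by rewrite -(subnKC hi); apply: tsN.
  by rewrite -(subnKC hj); apply: tsN.
case: (hcomp cauchy) => l hl.
have lo : vsmall v 0 l.
  case: (hl 0) => N hN.
  have -> : l = ts N - (ts N - l) by rewrite opprB addrC subrK.
  apply: (vsmallB hv) => //; exact: hN.
have hfix : hf l = l.
  apply/eqP; rewrite -subr_eq0; apply/eqP. apply: vsmall_all => k.
  case: (hl k) => N hN.
  have -> : hf l - l = (hf l - hf (ts N)) + (ts N.+1 - l) by rewrite /ts iterS addrA subrK.
  apply: (vsmallD hv); last by apply: hN.
  apply: (vsmall_le (l := k + 1)); first by rewrite lerDl.
  apply: hfc => //.
  have -> : l - ts N = - (ts N - l) by rewrite opprB.
  by apply: (vsmallN hv); apply: hN.
exists l; split => //.
by rewrite -[in Bc * l]hfix /hf mulrCA (mulfV B0) mulr1.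
Qed.

Lemma aniso_key m x y : (forall z, q z = 0 -> z = 0) ->
  vsmall v m (q x) -> vsmall v m (q y) -> vsmall v m (q (x + y)).
Proof.
move=> aniso hx hy.
case: (vsmall_dec v m (q (x + y))) => // hu; exfalso.
case: (not_vsmall hu) => u0 ult.
set z := x + y in u0 ult hu.
set u := q z in u0 ult hu.
set a := q x in hx; set c := q y in hy.
set be := b z x.
have hyz : y = z - x by rewrite /z addrAC subrr add0r.
have ec : c = u - 2 * be + a.
  rewrite /c hyz /u /be /a /qform bformBl !bformBr (bformC hBsym x z); ring.
have mu1 : 1 <= m - v u by move: ult; move: (v u) => w; lia.
have hA : vsmall v 1 (a / u).
  by apply: (vsmall_le mu1); have := vsmallM hv hx (vsmallV hv u0).
have hC : vsmall v 1 (c / u).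
  by apply: (vsmall_le mu1); have := vsmallM hv hy (vsmallV hv u0).
have hB : vsmall v 1 (2 * be / u - 1).
  have -> : 2 * be / u - 1 = a / u - c / u by rewrite ec; field.
  exact: (vsmallB hv).
case: (hensel hA hB) => l [lo hl].
have e2 : u + a * l * l - 2 * be * l = 0.
  have -> : u + a * l * l - 2 * be * l = u * ((1 + a / u * l * l) - 2 * be / u * l).
    by field.
  by rewrite -hl subrr mulr0.
have qz : q (z - l *: x) = 0.
  rewrite /qform bformBl !bformBr !bformZl !bformZr -/(q z) -/(q x) -/u -/a.
  rewrite (bformC hBsym x z) -/be -e2; ring.
have zl : z = l *: x by apply/eqP; rewrite -subr_eq0; apply/eqP; apply: aniso.
apply: hu; rewrite /u zl /qform bformZl bformZr -/(q x) -/a mulrA.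
have := vsmallM hv (vsmallM hv lo lo) hx; by rewrite !add0r.
Qed.

End Aniso.


Section Conj.
Variables (F : fieldType) (v : F -> int) (B : 'M[F]_2).
Hypothesis hBnd : B \in unitmx.
Local Notation b := (bform B).
Variable dag : 'M[F]_2 -> 'M[F]_2.
Hypothesis hdag : forall (s : 'M[F]_2) (x y : 'cV[F]_2),
            bform B x (s *m y) = bform B (dag s *m x) y.

Variables (g h : 'M[F]_2) (mu : F).
Hypotheses (gh : g *m h = 1%:M) (hg : h *m g = 1%:M) (mu0 : mu != 0)
  (hsim : forall x y, b (g *m x) (g *m y) = mu * b x y).

Lemma conj_aut : inv_automorphism dag (fun s => g *m s *m h).
Proof.
split.
  exists (fun s => h *m s *m g) => s.
    by rewrite !mulmxA hg mul1mx -mulmxA hg mulmx1.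
  by rewrite !mulmxA gh mul1mx -mulmxA gh mulmx1.
split; first by move=> s t; rewrite mulmxDr mulmxDl.
split.
  move=> s t; change (g *m (s *m t) *m h = (g *m s *m h) *m (g *m t *m h)).
  by rewrite !mulmxA -(mulmxA _ h g) hg mulmx1.
split; first by change (g *m 1%:M *m h = 1%:M); rewrite mulmx1 gh.
split; first by move=> c s; rewrite -scalemxAr -scalemxAl.
move=> s; apply: (adj_uniq hBnd) => x y.
have A := hsim (dag s *m h *m x) (h *m y).
rewrite !mulmxA gh mul1mx in A.
have Bq := hdag s (h *m x) (h *m y).
have C := hsim (h *m x) (s *m h *m y).
rewrite !mulmxA gh mul1mx in C.
rewrite A -(hdag (g *m s *m h)) -[dag s *m h *m x]mulmxA -Bq (mulmxA s h y) -C.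
by [].
Qed.

End Conj.

Section Sum.
Variables (F : fieldType) (v : F -> int) (B : 'M[F]_2).
Hypothesis hv : discrete_valuation v.

Definition lsum (L L' : 'cV[F]_2 -> Prop) : 'cV[F]_2 -> Prop :=
  fun x => exists y z, L y /\ L' z /\ x = y + z.

Lemma lattice0 L : is_lattice v L -> L 0.
Proof.
case=> n [gs [hL _]]; apply/hL; exists (fun _ => 0); split; first by move=> _; left.
by rewrite big1 // => i _; rewrite scale0r.
Qed.

Lemma lattice_sum L L' : is_lattice v L -> is_lattice v L' -> is_lattice v (lsum L L').
Proof.
case=> n [gs [hL hs]] [n' [gs' [hL' hs']]].
pose G := fun k : 'I_(n + n') => match split k with inl i => gs i | inr j => gs' j end.
have sl : forall i, split (lshift n' i) = inl i := fun i => unsplitK (inl _ i).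
have sr : forall j, split (rshift n j) = inr j := fun j => unsplitK (inr _ j).
have sumE : forall C : 'I_(n + n') -> F, \sum_k C k *: G k =
    \sum_i C (lshift n' i) *: gs i + \sum_j C (rshift n j) *: gs' j.
  move=> C; rewrite big_split_ord /=; congr (_ + _); apply: eq_bigr => i _;
    by rewrite /G ?sl ?sr.
exists (n + n')%N, G; split.
  move=> x; split.
    case=> y [z [/hL [c [hc ->]] [/hL' [c' [hc' ->]] ->]]].
    exists (fun k => match split k with inl i => c i | inr j => c' j end); split.
      by move=> k; case: (split k).
    by rewrite sumE; congr (_ + _); apply: eq_bigr => i _; rewrite ?sl ?sr.
  case=> C [hC ->]; rewrite sumE.
  exists (\sum_i C (lshift n' i) *: gs i), (\sum_j C (rshift n j) *: gs' j).
  split; first by apply/hL; exists (fun i => C (lshift n' i)).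
  by split => //; apply/hL'; exists (fun j => C (rshift n j)).
move=> w; case: (hs w) => c ->.
exists (fun k => match split k with inl i => c i | inr j => 0 end).
rewrite sumE [X in _ + X]big1 ?addr0; last by move=> j _ /=; rewrite sr scale0r.
by apply: eq_bigr => i _ /=; rewrite sl.
Qed.

End Sum.


Section Mx.
Variable F : fieldType.

Lemma mulmx_delta_r (A : 'M[F]_2) (i a b : 'I_2) (j : 'I_2) :
  (A *m delta_mx i j) a b = A a i * (b == j)%:R.
Proof.
rewrite mxE (bigD1 i) //= big1 => [|k /negPf nk]; last by rewrite mxE nk mulr0.
by rewrite mxE eqxx addr0.
Qed.

Lemma mulmx_delta_l (A : 'M[F]_2) (i a b : 'I_2) (j : 'I_2) :
  (delta_mx i j *m A) a b = (a == i)%:R * A j b.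
Proof.
rewrite mxE (bigD1 j) //= big1 => [|k /negPf nk]; last by rewrite mxE nk andbF mul0r.
by rewrite mxE eqxx andbT addr0.
Qed.

Lemma centre2 (K : 'M[F]_2) : (forall s, K *m s = s *m K) -> K = (K 0 0)%:M.
Proof.
move=> hK; apply/matrixP => a i.
have := congr1 (fun M : 'M[F]_2 => M a 0) (hK (delta_mx i 0)).
rewrite /= mulmx_delta_r mulmx_delta_l eqxx mulr1 => ->.
by rewrite mxE; case: (a == i); rewrite ?mul1r ?mul0r ?mulr1n ?mulr0n.
Qed.

Lemma ker_exists (A : 'M[F]_2) : A \notin unitmx ->
  exists c : 'cV[F]_2, c != 0 /\ A *m c = 0.
Proof.
move=> hA.
have K0 : kermx A^T != 0 by rewrite kermx_eq0 row_free_unit unitmx_tr.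
have [i ri] : exists i, row i (kermx A^T) != 0.
  apply: NNPP => hn; move/eqP: K0; apply; apply/row_matrixP => i.
  rewrite row0; apply/eqP/negPn/negP => hi; apply: hn; by exists i.
exists (row i (kermx A^T))^T; split.
  by apply/eqP => /(congr1 trmx); rewrite trmxK trmx0; apply/eqP.
have := congr1 trmx (congr1 (row i) (mulmx_ker A^T)).
by rewrite row_mul row0 trmx_mul trmxK trmx0.
Qed.

End Mx.

Section SN.
Variable F : fieldType.
Variable phi : 'M[F]_2 -> 'M[F]_2.
Hypotheses (phi_bij : bijective phi)
  (phiD : forall s t, phi (s + t) = phi s + phi t)
  (phiM : forall s t, phi (s * t) = phi s * phi t)
  (phiZ : forall (c : F) s, phi (c *: s) = c *: phi s).

Lemma phiM' s t : phi (s *m t) = phi s *m phi t.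
Proof. exact: phiM. Qed.

Lemma phi0 : phi 0 = 0.
Proof.
have := phiD 0 0; rewrite addr0 => h.
by apply: (addrI (phi 0)); rewrite addr0 -h.
Qed.

Lemma phi_sum n (G : 'I_n -> 'M[F]_2) : phi (\sum_i G i) = \sum_i phi (G i).
Proof. exact: (big_morph phi phiD phi0). Qed.

Local Notation P i j := (phi (delta_mx i j)).

Lemma PP (i j k l : 'I_2) : P i j *m P k l = P i l *+ (j == k).
Proof.
rewrite -phiM' mul_delta_mx_cond; case: (j == k).
  by rewrite !mulr1n.
by rewrite !mulr0n phi0.
Qed.

Lemma skolem_noether : exists g h : 'M[F]_2,
  [/\ g *m h = 1%:M, h *m g = 1%:M & forall s, phi s = g *m s *m h].
Proof.
have inj := bij_inj phi_bij.
have P00 : P 0 0 != 0.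
  apply/eqP => h0; have := congr1 (fun M : 'M[F]_2 => M 0 0) (inj _ _ (etrans h0 (esym phi0))).
  by rewrite /= !mxE eqxx /= => /eqP; rewrite oner_eq0.
have [j cj] : exists j, col j (P 0 0) != 0.
  apply: NNPP => hn; move/eqP: P00; apply; apply/matrixP => a b.
  have : col b (P 0 0) = 0 by apply/eqP/negPn/negP => hb; apply: hn; exists b.
  by move/(congr1 (fun M : 'cV[F]_2 => M a 0)); rewrite !mxE.
pose u : 'cV[F]_2 := delta_mx j 0.
pose g : 'M[F]_2 := \sum_(k < 2) (P k 0 *m u) *m delta_mx 0 k.
have Pg : forall i l : 'I_2, P i l *m g = (P i 0 *m u) *m delta_mx 0 l.
  move=> i l; rewrite /g mulmx_sumr (bigD1 l) //= big1 => [|k /negPf nk].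
    by rewrite !mulmxA PP eqxx mulr1n addr0.
  by rewrite !mulmxA PP eq_sym nk mulr0n !mul0mx.
have gd : forall i l : 'I_2, g *m delta_mx i l = (P i 0 *m u) *m delta_mx 0 l.
  move=> i l; rewrite /g mulmx_suml (bigD1 i) //= big1 => [|k /negPf nk].
    by rewrite -mulmxA mul_delta_mx addr0.
  by rewrite -mulmxA mul_delta_mx_cond nk mulr0n mulmx0.
have comm : forall s, phi s *m g = g *m s.
  move=> s.
  have -> : phi s = \sum_i \sum_l s i l *: P i l.
    rewrite {1}(matrix_sum_delta s) phi_sum; apply: eq_bigr => i _.
    by rewrite phi_sum; apply: eq_bigr => l _; rewrite phiZ.
  have -> : g *m s = \sum_i \sum_l s i l *: (g *m delta_mx i l).
    rewrite {1}(matrix_sum_delta s) mulmx_sumr; apply: eq_bigr => i _.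
    by rewrite mulmx_sumr; apply: eq_bigr => l _; rewrite scalemxAr.
  rewrite mulmx_suml; apply: eq_bigr => i _.
  rewrite mulmx_suml; apply: eq_bigr => l _.
  by rewrite -scalemxAl Pg gd.
have gu : g \in unitmx.
  apply: NNPP => /negP hg.
  case: (ker_exists hg) => c [c0 gc].
  have gsc : forall s, g *m (s *m c) = 0.
    by move=> s; rewrite mulmxA -comm -mulmxA gc mulmx0.
  have [k ck] : exists k, c k 0 != 0.
    apply: NNPP => hn; move/eqP: c0; apply; apply/matrixP => a b.
    rewrite (ord1 b) mxE; apply/eqP/negPn/negP => ha; apply: hn; by exists a.
  have colg : forall a, col a g = 0.
    move=> a; have := gsc (delta_mx a k).
    rewrite -(mul_delta_mx (0 : 'I_1)) -mulmxA -rowE (mx11_scalar (row k c)) mul_mx_scalar.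
    rewrite -scalemxAr -colE mxE => /(congr1 (fun M => (c k 0)^-1 *: M)).
    by rewrite scalerA mulVf // scale1r scaler0.
  have g0 : g = 0.
    apply/matrixP => a b; have := congr1 (fun M : 'cV[F]_2 => M a 0) (colg b).
    by rewrite !mxE.
  move: (gd 0 0); rewrite g0 mul0mx => /(congr1 (fun M => M *m delta_mx (0 : 'I_2) (0 : 'I_1))).
  rewrite mul0mx -mulmxA mul_delta_mx.
  have -> : (delta_mx 0 0 : 'M[F]_1) = 1%:M by apply/matrixP => a b; rewrite (ord1 a) (ord1 b) !mxE.
  rewrite mulmx1 -colE => h0; move/eqP: cj; apply; by rewrite -h0.
exists g, (invmx g); split.
- exact: mulmxV.
- exact: mulVmx.
move=> s; by rewrite -comm -mulmxA mulmxV // mulmx1.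
Qed.

End SN.


Section Sim.
Variables (F : fieldType) (B : 'M[F]_2).
Hypothesis hBsym : B^T = B.
Hypothesis hBnd : B \in unitmx.
Local Notation b := (bform B).
Variable dag : 'M[F]_2 -> 'M[F]_2.
Hypothesis hdag : forall (s : 'M[F]_2) (x y : 'cV[F]_2),
            bform B x (s *m y) = bform B (dag s *m x) y.
Variables (g h : 'M[F]_2).
Hypotheses (gh : g *m h = 1%:M) (hg : h *m g = 1%:M)
  (hcomm : forall s, g *m dag s *m h = dag (g *m s *m h)).

Lemma nondeg2 w : (forall x, b x w = 0) -> w = 0.
Proof. by move=> hw; apply: (nondeg hBnd) => y; rewrite bformC. Qed.

Lemma similitude : exists mu : F, mu != 0 /\
  forall x y, b (g *m x) (g *m y) = mu * b x y.
Proof.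
have [K bK] : exists K : 'M[F]_2, forall x y, b (g *m x) (g *m y) = b x (K *m y).
  exists (invmx B *m (g^T *m B *m g)).
  move=> x y; rewrite /bform trmx_mul !mulmxA (mulmxK hBnd).
  by [].
have KC : forall s, K *m s = s *m K.
  move=> s; apply: (mx_ext) => y; rewrite -!mulmxA.
  apply/eqP; rewrite -subr_eq0; apply/eqP; apply: nondeg2 => x.
  have e : b x (K *m (s *m y)) = b x (s *m (K *m y)).
    rewrite -bK.
    rewrite (_ : g *m (s *m y) = (g *m s *m h) *m (g *m y)); last first.
      by rewrite !mulmxA -(mulmxA _ h g) hg mulmx1.
    rewrite (hdag (g *m s *m h)) -hcomm.
    rewrite (_ : (g *m dag s *m h) *m (g *m x) = g *m (dag s *m x)); last first.
      by rewrite !mulmxA -(mulmxA _ h g) hg mulmx1.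
    by rewrite bK -hdag.
  by rewrite bformBr e subrr.
have KE := centre2 KC.
exists (K 0 0); split.
  apply/eqP => k0.
  have all0 : forall x, x = 0 :> 'cV[F]_2.
    move=> x; apply: (nondeg hBnd) => y.
    rewrite -[x]mul1mx -[y]mul1mx -gh -!mulmxA bK {1}KE k0 raddf0 mul0mx.
    by rewrite bform0r.
  have := congr1 (fun M : 'cV[F]_2 => M 0 0) (all0 (delta_mx 0 0)).
  by rewrite !mxE eqxx /= => /eqP; rewrite oner_eq0.
by move=> x y; rewrite bK {1}KE mul_scalar_mx bformZr.
Qed.

End Sim.


Lemma part2_from (F : fieldType) (v : F -> int) (B : 'M[F]_2) (hBnd : B \in unitmx)
  (dag : 'M[F]_2 -> 'M[F]_2)
  (hdag : forall (s : 'M[F]_2) (x y : 'cV[F]_2),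
            bform B x (s *m y) = bform B (dag s *m x) y)
  (L L' : 'cV[F]_2 -> Prop) (g h : 'M[F]_2) :
  g *m h = 1%:M -> h *m g = 1%:M ->
  (forall x y, bform B (g *m x) (g *m y) = bform B x y) ->
  (forall x, L' x <-> L (h *m x)) ->
  exists phi : 'M[F]_2 -> 'M[F]_2,
       inv_automorphism dag phi /\
       forall t, (exists2 s, order_of v B L s & phi s = t) <-> order_of v B L' t.
Proof.
move=> gh hg hiso hL.
have hsim : forall x y, bform B (g *m x) (g *m y) = 1 * bform B x y.
  by move=> x y; rewrite mul1r hiso.
have -> : L' = (fun x => L (h *m x)).
  by apply: functional_extensionality => x; apply: propositional_extensionality.
exists (fun s => g *m s *m h); split.
  exact: (conj_aut hBnd hdag gh hg hsim).
move=> t; exact: (image_tr v gh hg (oner_neq0 F) hsim).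
Qed.

Theorem lemma5p4 (F : fieldType) (v : F -> int)
  (hF : nonarch_local_field v) (hchar : (2%:R : F) != 0)
  (B : 'M[F]_2) (hBsym : B^T = B) (hBnd : B \in unitmx)
  (dag : 'M[F]_2 -> 'M[F]_2)
  (hdag : forall (s : 'M[F]_2) (x y : 'cV[F]_2),
            bform B x (s *m y) = bform B (dag s *m x) y) :
  (forall (phi : 'M[F]_2 -> 'M[F]_2) (I : F -> Prop) (L : 'cV[F]_2 -> Prop),
     inv_automorphism dag phi -> fractional_ideal v I -> maximal_lattice v B I L ->
     exists (l : F) (L' : 'cV[F]_2 -> Prop),
       l != 0 /\ maximal_lattice v B (scale_ideal l I) L' /\
       forall t, (exists2 s, order_of v B L s & phi s = t) <-> order_of v B L' t)
  /\
  (forall (I : F -> Prop) (L L' : 'cV[F]_2 -> Prop),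
     fractional_ideal v I -> maximal_lattice v B I L -> maximal_lattice v B I L' ->
     exists phi : 'M[F]_2 -> 'M[F]_2,
       inv_automorphism dag phi /\
       forall t, (exists2 s, order_of v B L s & phi s = t) <-> order_of v B L' t).
Proof.
case: hF => hv hcomp _.
split.
  move=> phi I L [phbij [phD [phM [ph1 [phZ phdag]]]]] hI hL.
  case: (skolem_noether phbij phD phM phZ) => g [h [gh hg hphi]].
  have hcomm : forall s, g *m dag s *m h = dag (g *m s *m h).
    by move=> s; rewrite -!hphi.
  case: (similitude hBsym hBnd hdag gh hg hcomm) => mu [mu0 hsim].
  exists mu, (fun y => L (h *m y)); split => //; split.
    exact: (maximal_tr gh hg mu0 hsim hL).
  move=> t; rewrite -(image_tr v gh hg mu0 hsim).
  by split; case=> s hs e; exists s => //; rewrite ?hphi in e *.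
move=> I L L' hI hL hL'.
case: (frac_exp hv hI) => m hm.
case: (classic (exists x, x != 0 /\ qform B x = 0)).
  case=> e [e0 qe].
  case: (nondeg_ex hBnd e0) => y ey.
  have [y' ey'] : exists y', bform B e y' = 1.
    by exists ((bform B e y)^-1 *: y); rewrite bformZr mulVf.
  have [f [ef qf]] : exists f, bform B e f = 1 /\ qform B f = 0.
    exists (y' - (qform B y' / 2) *: e); split.
      by rewrite bformBr bformZr -/(qform B e) qe mulr0 subr0.
    rewrite /qform bformBl !bformBr !bformZl !bformZr -/(qform B e) qe.
    rewrite (bformC hBsym y' e) ey' -/(qform B y'); field.
    exact: hchar.
  case: (hyp_max hv hBsym qe qf ef hchar hm hL) => i hi.
  case: (hyp_max hv hBsym qe qf ef hchar hm hL') => j hj.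
  case: (dv_surj hv (j - i)) => p [p0 vp].
  have pi0 : p^-1 != 0 by rewrite invr_eq0.
  pose g := p *: rk1 B e f + p^-1 *: rk1 B f e.
  pose h := p^-1 *: rk1 B e f + p *: rk1 B f e.
  have gE : forall x, g *m x = (p * bform B f x) *: e + (p^-1 * bform B e x) *: f.
    by move=> x; rewrite /g mulmxDl -!scalemxAl !rk1E !scalerA.
  have hE : forall x, h *m x = (p^-1 * bform B f x) *: e + (p * bform B e x) *: f.
    by move=> x; rewrite /h mulmxDl -!scalemxAl !rk1E !scalerA.
  have cf := coord_f hBsym qf ef.
  have ce := coord_e qe ef.
  have gh : g *m h = 1%:M.
    apply: mx_ext => x; rewrite mul1mx -mulmxA hE gE cf ce !mulrA mulfV // mulVf // !mul1r.
    by rewrite -(hyp_decomp hBsym qe qf ef).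
  have hg : h *m g = 1%:M.
    apply: mx_ext => x; rewrite mul1mx -mulmxA gE hE cf ce !mulrA mulfV // mulVf // !mul1r.
    by rewrite -(hyp_decomp hBsym qe qf ef).
  apply: (part2_from v hBnd hdag gh hg).
    move=> x1 y1; rewrite (coord_b hBsym qe qf ef (g *m x1)) !gE !cf !ce.
    rewrite (coord_b hBsym qe qf ef x1 y1); field; exact: p0.
  move=> x; rewrite hj hi /Dlat hE cf ce.
  have e1 : i - v p^-1 = j by rewrite (vV hv p0) vp opprK addrC subrK.
  have e2 : m - i - v p = m - j by rewrite vp; lia.
  rewrite (vsmall_scale hv i (bform B f x) pi0) e1.
  rewrite mulrCA (vsmall_scale hv (m - i) (2 * bform B e x) p0) e2.
  by [].
move=> aniso'.
have aniso : forall z, qform B z = 0 -> z = 0.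
  move=> z qz; apply/eqP/negPn/negP => z0; apply: aniso'; by exists z.
have hnL : forall a, norm_lattice v B L a -> vsmall v m a.
  by case: hL => _ hn _ a /hn /hm.
have hnL' : forall a, norm_lattice v B L' a -> vsmall v m a.
  by case: hL' => _ hn _ a /hn /hm.
have hK : is_lattice v (lsum L L') by apply: lattice_sum; [case: hL | case: hL'].
have nK : forall a, norm_lattice v B (lsum L L') a -> I a.
  move=> a na; apply/hm; apply: (norm_sub hv _ na).
  move=> y [y1 [y2 [h1 [h2 ->]]]]; apply: (aniso_key hv hcomp hBsym aniso).
    by apply: hnL; apply: norm_q.
  by apply: hnL'; apply: norm_q.
have L0 : L 0 by case: hL => hl _ _; exact: (lattice0 hl).
have L'0 : L' 0 by case: hL' => hl _ _; exact: (lattice0 hl).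
have subL : forall x, L x -> lsum L L' x by move=> x Lx; exists x, 0; rewrite addr0.
have subL' : forall x, L' x -> lsum L L' x by move=> x Lx; exists 0, x; rewrite add0r.
have KL : forall x, lsum L L' x -> L x by case: hL => _ _ hm1; apply: hm1.
have KL' : forall x, lsum L L' x -> L' x by case: hL' => _ _ hm1; apply: hm1.
apply: (part2_from v hBnd hdag (g := 1%:M) (h := 1%:M)); rewrite ?mulmx1 //.
  by move=> x y; rewrite !mul1mx.
move=> x; rewrite mul1mx; split => hx.
  by apply: KL; apply: subL'.
by apply: KL'; apply: subL.
Qed.
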